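(* Let $a,b\in\mathbb{Q}_3$ with $\gamma(a)=m\ge4$, $\gamma(b)=0$ and $(b_0,b_1)=(1,0)$ or $(2,2)$. Then $x=\sum_{k\ge0}x_k3^k\in\mathbb{Z}_3^*$ is a solution of $x^3+ax=b$ if and only if the congruences $$x_0^3\equiv b_0\pmod3,\qquad x_0^3\equiv b_0+3b_1\pmod9,$$ $$x_0^2x_1+M_1(x_0)\equiv b_2\pmod3,$$ $$x_0^2x_2+P_3^2(x_0,x_1)+x_0x_1^2+M_2(x_0,x_1)\equiv b_3\pmod3,$$ $$x_0^2x_{k-1}+P_k^{k-1}(x_0,\dots,x_{k-2})+2x_0x_1x_{k-2}\equiv b_k\pmod3,\quad 4\le k\le m-1,$$ $$x_0^2x_{m-1}+P_m^{m-1}(x_0,\dots,x_{m-2})+2x_0x_1x_{m-2}+x_0a_0\equiv b_m\pmod3,$$ $$x_0^2x_{k-1}+P_k^{k-1}(x_0,\dots,x_{k-2})+2x_0x_1x_{k-2}+x_{k-m}a_0+\dots+x_0a_{k-m}\equiv b_k\pmod3,\quad k\ge m+1,$$ are fulfilled, where the integers $M_k(x_0,\dots,x_{k-1})$ are defined by $$x_0^3=b_0+3b_1+9M_1(x_0),$$ $$x_0^2x_1=b_2-M_1(x_0)+3M_2(x_0,x_1),$$ $$x_0^2x_2+P_3^2(x_0,x_1)+x_0x_1^2=b_3-M_2(x_0,x_1)+3M_3(x_0,x_1,x_2),$$ $$x_0^2x_{k-1}+P_k^{k-1}(x_0,\dots,x_{k-2})+2x_0x_1x_{k-2}=b_k-M_{k-1}(x_0,\dots,x_{k-2})+3M_k(x_0,\dots,x_{k-1}),\quad4\le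 k\le m-1,$$ $$x_0^2x_{m-1}+P_m^{m-1}(x_0,\dots,x_{m-2})+2x_0x_1x_{m-2}+x_0a_0=b_m-M_{m-1}(x_0,\dots,x_{m-2})+3M_m(x_0,\dots,x_{m-1}),$$ $$x_0^2x_{k-1}+P_k^{k-1}(x_0,\dots,x_{k-2})+2x_0x_1x_{k-2}+x_{k-m}a_0+\dots+x_0a_{k-m}=b_k-M_{k-1}(x_0,\dots,x_{k-2})+3M_k(x_0,\dots,x_{k-1}),\quad k\ge m+1.$$
   Context: Write $a=3^{\gamma(a)}(a_0+a_13+a_23^2+\dots)$, $b=3^{\gamma(b)}(b_0+b_13+b_23^2+\dots)$ in canonical form, with digits $a_j,b_j\in\{0,1,2\}$, $a_0,b_0\ne0$, $\gamma(a),\gamma(b)\in\mathbb{Z}$. $\mathbb{Z}_3^*$ is the set of $3$-adic units; $x\in\mathbb{Z}_3^*$ is written $x=x_0+x_13+x_23^2+\dots$ with $x_j\in\{0,1,2\}$, $x_0\ne0$. For $j\le k$, $P_k^j(x_0,\dots,x_{j-1})=\sum\frac{6}{m_0!\cdots m_{j-1}!}x_0^{m_0}\cdots x_{j-1}^{m_{j-1}}$, the sum over nonnegative integers $m_0,\dots,m_{j-1}$ with $\sum_{i=0}^{j-1}m_i=3$ and $\sum_{i=1}^{j-1}im_i=k$. *)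

(* Defs.v *)
From mathcomp Require Import all_boot all_order all_algebra.
Set Implicit Arguments. Unset Strict Implicit. Unset Printing Implicit Defensive.
Import Order.TTheory GRing.Theory Num.Theory.
Local Open Scope ring_scope.

(* A 3-adic digit sequence: d k in {0,1,2} for all k.  A 3-adic number with
   valuation g and canonical digits d is 3^g * (d 0 + d 1 * 3 + d 2 * 3^2 + ...). *)
Definition digits3 (d : nat -> nat) : Prop := forall k, (d k < 3)%N.

Definition trunc3 (d : nat -> nat) (N : nat) : int :=
  \sum_(k < N) (d k)%:Z * 3 ^+ k.

(* x^3 + a x = b in Z_3 (hence in Q_3), where
   a = 3^m (a_0 + a_1 3 + ...), b = b_0 + b_1 3 + ..., x = x_0 + x_1 3 + ...
   Equality in Z_3 = lim Z/3^N Z is equality modulo 3^N for every N. *)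
Definition cubic_sol3 (m : nat) (a b x : nat -> nat) : Prop :=
  forall N : nat,
    (trunc3 x N ^+ 3 + 3 ^+ m * trunc3 a N * trunc3 x N
       = trunc3 b N %[mod (3 ^+ N : int)])%Z.

(* Since sum m_i = 3, each m_i <= 3, so the m_i range over 'I_4 without loss;
   6/(m_0!...m_{j-1}!) is an integer (exact division). *)
Definition Pkj (k j : nat) (x : nat -> nat) : int :=
  \sum_(mu : {ffun 'I_j -> 'I_4} |
          ((\sum_(i < j) (mu i : nat))%N == 3%N) &&
          ((\sum_(i < j | (1 <= i)%N) (i * mu i)%N)%N == k))
     ((6 %/ (\prod_(i < j) (mu i)`!))%N%:Z * \prod_(i < j) (x i)%:Z ^+ (mu i : nat)).

Definition Lhs (m : nat) (a x : nat -> nat) (k : nat) : int :=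
  let X i := (x i)%:Z in
  if k == 2%N then X 0%N ^+ 2 * X 1%N
  else if k == 3%N then X 0%N ^+ 2 * X 2%N + Pkj 3 2 x + X 0%N * X 1%N ^+ 2
  else X 0%N ^+ 2 * X k.-1 + Pkj k k.-1 x + 2 * X 0%N * X 1%N * X (k - 2)%N
       + (if (m <= k)%N then
            \sum_(i < (k - m).+1) X (k - m - i)%N * (a i)%:Z
          else 0).

(* The integers M_k(x_0,...,x_{k-1}), k >= 1:
     x_0^3 = b_0 + 3 b_1 + 9 M_1,
     Lhs_k = b_k - M_{k-1} + 3 M_k   (k >= 2).
   (Euclidean integer division; exact whenever the preceding congruences hold.) *)
Fixpoint Mk (m : nat) (a b x : nat -> nat) (k : nat) : int :=
  match k with
  | 0%N => 0
  | 1%N => (((x 0%N)%:Z ^+ 3 - (b 0%N)%:Z - 3 * (b 1%N)%:Z) %/ 9)%Z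
  | S k' => ((Lhs m a x k - (b k)%:Z + Mk m a b x k') %/ 3)%Z
  end.

Definition congruences36 (m : nat) (a b x : nat -> nat) : Prop :=
  ((x 0%N)%:Z ^+ 3 = (b 0%N)%:Z %[mod 3])%Z /\
  ((x 0%N)%:Z ^+ 3 = (b 0%N)%:Z + 3 * (b 1%N)%:Z %[mod 9])%Z /\
  (forall k : nat, (2 <= k)%N ->
     (Lhs m a x k + Mk m a b x k.-1 = (b k)%:Z %[mod 3])%Z).

(* Main.v *)
Require Import Defs.
From mathcomp Require Import all_boot all_order all_algebra.
Import Order.TTheory GRing.Theory Num.Theory.
Set Implicit Arguments. Unset Strict Implicit. Unset Printing Implicit Defensive.
Local Open Scope ring_scope.

Definition Px (x : nat -> nat) (J : nat) : {poly int} :=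
  \sum_(i < J) (x i)%:Z *: 'X^i.

Definition Fs (x : nat -> nat) (s k J : nat) : int :=
  \sum_(mu : {ffun 'I_J -> 'I_4} |
          ((\sum_(i < J) (mu i : nat))%N == s) &&
          ((\sum_(i < J) (i * mu i)%N)%N == k))
     ((s`! %/ (\prod_(i < J) (mu i)`!))%N%:Z * \prod_(i < J) (x i)%:Z ^+ (mu i : nat)).

Lemma prod_fact_dvd J (F : 'I_J -> nat) :
  (\prod_(i < J) (F i)`! %| (\sum_(i < J) F i)`!)%N.
Proof.
elim: J F => [|J IH] F; first by rewrite !big_ord0.
rewrite !big_ord_recr /=.
set S := (\sum_(i < J) _)%N; set P := (\prod_(i < J) _)%N.
have HP : (P %| S`!)%N := IH _.
rewrite -(@bin_fact (S + F ord_max) (F ord_max)) ?leq_addl // addnK.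
rewrite mulnC [((F ord_max)`! * _)%N]mulnC mulnA.
rewrite -mulnA; apply: dvdn_mull; rewrite [X in (_ %| X)%N]mulnC; exact: dvdn_mul HP (dvdnn _).
Qed.

Definition hsplit J (p : {ffun 'I_J -> 'I_4} * 'I_4) : {ffun 'I_J.+1 -> 'I_4} :=
  [ffun i => if unlift ord_max i is Some j then p.1 j else p.2].
Definition gsplit J (mu : {ffun 'I_J.+1 -> 'I_4}) : {ffun 'I_J -> 'I_4} * 'I_4 :=
  ([ffun j => mu (lift ord_max j)], mu ord_max).

Lemma hsplit_bij J : bijective (@hsplit J).
Proof.
exists (@gsplit J).
- case=> f t; rewrite /gsplit /hsplit /=; congr pair.
    by apply/ffunP => j; rewrite !ffunE liftK.
  by rewrite ffunE unlift_none.
- move=> mu; apply/ffunP => i; rewrite /hsplit /gsplit ffunE.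
  by case: unliftP => [j ->|->] /=; rewrite ?ffunE.
Qed.

Lemma hsplit_wid J (p : {ffun 'I_J -> 'I_4} * 'I_4) (i : 'I_J) : hsplit p (widen_ord (leqnSn J) i) = p.1 i.
Proof.
have -> : widen_ord (leqnSn J) i = lift ord_max i.
  by apply: val_inj => /=; rewrite /bump leqNgt ltn_ord.
by rewrite ffunE liftK.
Qed.

Lemma hsplit_max J (p : {ffun 'I_J -> 'I_4} * 'I_4) : hsplit p (@ord_max J) = p.2.
Proof. by rewrite ffunE unlift_none. Qed.

From mathcomp Require Import zify ring.

Lemma fact_div_split s t P : (t <= s)%N -> (P %| (s - t)`!)%N ->
  (s`! %/ (P * t`!) = 'C(s, t) * ((s - t)`! %/ P))%N.
Proof.
move=> ts hP.
have Pp : (0 < P)%N by case: P hP => //; rewrite dvd0n eqn0Ngt fact_gt0.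
rewrite -(bin_fact ts) -{1}(divnK hP).
set q := ((s - t)`! %/ P)%N.
rewrite [X in (X %/ _)%N](_ : _ = 'C(s, t) * q * (P * t`!))%N.
  by rewrite mulnK // muln_gt0 Pp fact_gt0.
by nia.
Qed.

Lemma Fs_rec x s k J : Fs x s k J.+1 =
  \sum_(t < 4) (if (t <= s)%N && (J * t <= k)%N then
        ('C(s, t))%:Z * (x J)%:Z ^+ t * Fs x (s - t) (k - J * t) J else 0).
Proof.
rewrite /Fs (reindex (@hsplit J)); last by apply: onW_bij; exact: hsplit_bij.
rewrite big_mkcond /=.
rewrite (eq_bigr (fun p => (fun (f : {ffun 'I_J -> 'I_4}) (t : 'I_4) =>
   if ((\sum_(i < J) (f i : nat))%N + t == s) && ((\sum_(i < J) (i * f i)%N)%N + J * t == k)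
   then ((s`! %/ ((\prod_(i < J) (f i)`!) * t`!))%N%:Z *
         ((\prod_(i < J) (x i)%:Z ^+ (f i : nat)) * (x J)%:Z ^+ t))
   else 0) p.1 p.2)); last first.
  move=> p _; rewrite !big_ord_recr /= !hsplit_max.
  congr (if ((_ + _)%N == _) && ((_ + _)%N == _) then
     (Posz (_ %/ (_ * _))%N) * (_ * _) else _);
    try by apply: eq_bigr => i _; rewrite hsplit_wid.
rewrite -(pair_bigA _ (fun (f : {ffun 'I_J -> 'I_4}) (t : 'I_4) =>
   if ((\sum_(i < J) (f i : nat))%N + t == s) && ((\sum_(i < J) (i * f i)%N)%N + J * t == k)
   then ((s`! %/ ((\prod_(i < J) (f i)`!) * t`!))%N%:Z *
         ((\prod_(i < J) (x i)%:Z ^+ (f i : nat)) * (x J)%:Z ^+ t))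
   else 0)) /=.
rewrite exchange_big /=; apply: eq_bigr => t _.
case: ifP => [/andP[ts jk] | h].
- rewrite mulr_sumr [RHS]big_mkcond; apply: eq_bigr => f _.
  set Sf := (\sum_(i < J) _)%N; set Wf := (\sum_(i < J) _)%N.
  have e1 : (Sf + t == s)%N = (Sf == s - t)%N by rewrite -[RHS](eqn_add2r t) subnK.
  have e2 : (Wf + J * t == k)%N = (Wf == k - J * t)%N by rewrite -[RHS](eqn_add2r (J * t)) subnK.
  rewrite e1 e2; case: ifP => // /andP[/eqP hS _].
  rewrite fact_div_split //; last by rewrite -hS; apply: prod_fact_dvd.
  rewrite PoszM; ring.
- apply: big1 => f _; rewrite ifF //.
  apply/negbTE/negP => /andP[/eqP e1 /eqP e2]; move: h.
  by rewrite -e1 -e2 !leq_addl.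
Qed.

Lemma Fs0 x s k : Fs x s k 0 = ((s == 0%N) && (k == 0%N))%:R.
Proof.
rewrite /Fs.
rewrite (eq_bigl (fun _ => (0 == s)%N && (0 == k)%N)); last by move=> mu; rewrite !big_ord0.
rewrite (eq_bigr (fun _ => (s`! %/ 1)%N%:Z)); last by move=> mu _; rewrite !big_ord0 mulr1.
rewrite ![(0 == _)%N]eq_sym.
case E: ((s == 0%N) && (k == 0%N)) => /=; last by rewrite big_pred0.
move/andP: E => [/eqP -> _].
rewrite big_const card_ffun !card_ord /=.
by [].
Qed.

Lemma Px_S x J : Px x J.+1 = Px x J + (x J)%:Z *: 'X^J.
Proof. by rewrite /Px big_ord_recr. Qed.

Lemma coef_Px_pow x J : forall s k, (s <= 3)%N -> ((Px x J) ^+ s)`_k = Fs x s k J.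
Proof.
elim: J => [|J IH] s k hs.
  rewrite Fs0 /Px big_ord0 expr0n.
  case: s hs => [|s] _ /=; last by rewrite coef0.
  by rewrite coef1.
rewrite Px_S exprDn coef_sum Fs_rec.
rewrite (big_ord_widen 4 (fun t => ((Px x J ^+ (s - t) * ((x J)%:Z *: 'X^J) ^+ t) *+ 'C(s, t))`_k)) //.
rewrite big_mkcond /=; apply: eq_bigr => t _.
rewrite ltnS; case: (leqP t s) => ts //=.
rewrite coefMn exprZn -exprM -scalerAr coefZ coefMXn.
case: (leqP (J * t) k) => jk; last by rewrite mulr0 mul0rn.
rewrite IH; last by rewrite (leq_trans (leq_subr _ _)).
by rewrite -mulr_natl mulrA natz.
Qed.

Lemma Pkj_Fs x k j : Pkj k j x = Fs x 3 k j.
Proof.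
rewrite /Pkj /Fs; apply: eq_bigl => mu; congr (_ && (_ == _)).
rewrite big_mkcond /=; apply: eq_bigr => i _.
by case: i => [[|i] hi].
Qed.

Lemma Pkj_coef x k j : Pkj k j x = ((Px x j) ^+ 3)`_k.
Proof. by rewrite Pkj_Fs coef_Px_pow. Qed.

Lemma coef_Px x n i : (Px x n)`_i = if (i < n)%N then (x i)%:Z else 0.
Proof.
elim: n => [|n IH]; first by rewrite /Px big_ord0 coef0.
rewrite Px_S coefD IH coefZ coefXn.
case: (ltngtP i n) => h.
- by rewrite ltnS (ltnW h) mulr0 addr0.
- by rewrite ltnS leqNgt h /= mulr0 addr0.
- by rewrite h ltnSn mulr1 add0r.
Qed.

Lemma sum_tail_dvd (d : int) (F : nat -> int) n N : (n <= N)%N ->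
  (forall i, (n <= i)%N -> (d %| F i)%Z) ->
  (d %| \sum_(i < N) F i - \sum_(i < n) F i)%Z.
Proof.
move=> hn hF; elim: N hn => [|N IH] hn.
  by move: hn; rewrite leqn0 => /eqP ->; rewrite subrr dvdz0.
move: hn; rewrite leq_eqVlt => /orP[/eqP -> | hn]; first by rewrite subrr dvdz0.
rewrite big_ord_recr /= addrAC; apply: rpredD; first exact: IH.
by apply: hF; rewrite -ltnS.
Qed.

Lemma eval_mod (p : {poly int}) N :
  (3 ^+ N %| p.[3] - \sum_(i < N) p`_i * 3 ^+ i)%Z.
Proof.
rewrite (@horner_coef_wide _ (maxn N (size p))) ?leq_maxr //.
apply: (@sum_tail_dvd _ (fun i => p`_i * 3 ^+ i)); first by rewrite leq_maxl.
by move=> i hi; apply: dvdz_mull; apply: dvdz_exp2l.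
Qed.

Lemma trunc3_Px x N : trunc3 x N = (Px x N).[3].
Proof.
rewrite /trunc3 /Px horner_sum; apply: eq_bigr => i _.
by rewrite hornerZ hornerXn.
Qed.

Lemma Px_split x n N : (n <= N)%N -> exists S, Px x N = Px x n + 'X^n * S.
Proof.
elim: N => [|N IH] hn.
  by move: hn; rewrite leqn0 => /eqP ->; exists 0; rewrite mulr0 addr0.
move: hn; rewrite leq_eqVlt => /orP[/eqP -> | hn]; first by exists 0; rewrite mulr0 addr0.
have [S HS] := IH hn.
exists (S + (x N)%:Z *: 'X^(N - n)).
by rewrite Px_S HS mulrDr -addrA -scalerAr -exprD subnKC // -ltnS.
Qed.

Lemma cube_trunc x n N k : (k < n)%N -> (n <= N)%N ->
  ((Px x N) ^+ 3)`_k = ((Px x n) ^+ 3)`_k.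
Proof.
move=> hk hn; have [S ->] := Px_split x hn.
set A := Px x n.
have -> : (A + 'X^n * S) ^+ 3 = A ^+ 3 + 'X^n * (A ^+ 2 * S *+ 3 + A * 'X^n * S ^+ 2 *+ 3 + 'X^n * 'X^n * S ^+ 3).
  by rewrite !exprS !expr0 !mulr1 !mulrS !mulr0n ?addr0; ring.
by rewrite coefD coefXnM hk addr0.
Qed.

Definition cc x k : int := ((Px x k.+1) ^+ 3)`_k.

Definition uu (x : nat -> nat) k : int :=
  let X i := (x i)%:Z in
  if k == 0%N then 0 else if k == 1%N then X 0%N ^+ 2 * X 1%N
  else if k == 2%N then X 0%N ^+ 2 * X 2%N + X 0%N * X 1%N ^+ 2
  else X 0%N ^+ 2 * X k + 2 * X 0%N * X 1%N * X k.-1.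

Definition pp (x : nat -> nat) k : int :=
  if k == 0%N then (x 0%N)%:Z ^+ 3 else if (k <= 2)%N then 0 else Pkj k k.-1 x.

Lemma cc_small x k : (k <= 2)%N -> cc x k = 3 * uu x k + pp x k.
Proof.
rewrite /cc /uu /pp.
case: k => [|[|[|k]]] // _ /=;
  rewrite !exprS !expr0 !mulr1 !coefM !big_ord_recr !big_ord0 /= ?coefM !big_ord_recr ?big_ord0 /= !coef_Px /=; ring.
Qed.

Lemma cc_big x j : cc x j.+3 = 3 * uu x j.+3 + pp x j.+3.
Proof.
rewrite /cc /uu /pp /= Pkj_coef.
rewrite (Px_S x j.+3) (Px_S x j.+2).
set Q := Px x j.+2.
set V : {poly int} := ((x j.+2)%:Z)%:P + (x j.+3)%:Z *: 'X.
have -> : Q + (x j.+2)%:Z *: 'X^(j.+2) + (x j.+3)%:Z *: 'X^(j.+3) = Q + 'X^(j.+2) * V.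
  rewrite /V mulrDr -addrA; congr (_ + (_ + _)); first by rewrite mulrC mul_polyC.
  by rewrite -scalerAr -exprSr.
have -> : (Q + 'X^(j.+2) * V) ^+ 3 = Q ^+ 3 + 'X^(j.+2) * (Q * Q * V *+ 3) +
     'X^(j.+2 + j.+2) * (Q * V ^+ 2 *+ 3 + 'X^(j.+2) * V ^+ 3).
  by rewrite exprD !exprS !expr0 !mulr1 !mulrS !mulr0n ?addr0; ring.
rewrite !coefD coefXnM (coefXnM (j.+2 + j.+2)).
have h1 : (j.+3 < j.+2 + j.+2)%N by lia.
have h2 : (j.+3 < j.+2)%N = false by lia.
rewrite h1 h2 /= subSn // subnn addr0 coefMn.
rewrite !coefM !big_ord_recr !big_ord0 /= !coefM !big_ord_recr !big_ord0 /=.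
rewrite /Q !coef_Px /= /V !coefD !coefC !coefZ !coefX /=.
ring.
Qed.

Lemma cc_dec x k : cc x k = 3 * uu x k + pp x k.
Proof.
case: (leqP k 2) => hk; first exact: cc_small.
by case: k hk => [|[|[|j]]] // _; apply: cc_big.
Qed.

Definition Dd (a x : nat -> nat) j : int := \sum_(i < j.+1) (x (j - i)%N)%:Z * (a i)%:Z.

Definition LL m (a x : nat -> nat) k : int :=
  if k == 0%N then (x 0%N)%:Z ^+ 3 else if k == 1%N then 0 else Lhs m a x k.

Lemma LL_dec m a x k : (4 <= m)%N ->
  LL m a x k = uu x k.-1 + pp x k + (if (m <= k)%N then Dd a x (k - m) else 0).
Proof.
move=> hm; rewrite /LL /uu /pp /Lhs.
case: k => [|[|[|[|j]]]] /=.
- by rewrite ifF ?addr0 ?add0r //; lia.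
- by rewrite ifF ?addr0 ?add0r //; lia.
- by rewrite ifF ?addr0 //; lia.
- by rewrite ifF ?addr0; [ring | lia].
- rewrite /Dd; case: ifP => _; last by rewrite !addr0; ring.
  ring.
Qed.

Lemma cube_sum x N : \sum_(i < N) cc x i * 3 ^+ i - \sum_(k < N) (uu x k.-1 + pp x k) * 3 ^+ k
   = uu x N.-1 * 3 ^+ N.
Proof.
elim: N => [|N IH]; first by rewrite !big_ord0 subrr /uu /= mul0r.
rewrite !big_ord_recr /= cc_dec.
have -> : forall A B C D : int, (A + C) - (B + D) = (A - B) + (C - D) by move=> *; ring.
rewrite IH exprS; ring.
Qed.

Lemma reindex_a m (F : nat -> int) N :
  \sum_(k < N) (if (m <= k)%N then F (k - m)%N else 0) * 3 ^+ k =
  \sum_(i < N - m) F i * 3 ^+ (i + m).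
Proof.
elim: N => [|N IH]; first by rewrite !big_ord0.
rewrite big_ord_recr /= IH.
case: (leqP m N) => hmN.
  by rewrite subSn // big_ord_recr /= subnK.
have -> : (N.+1 - m = N - m)%N by lia.
by rewrite mul0r addr0.
Qed.

Lemma coef_PaPx a x N i : (i < N)%N -> (Px a N * Px x N)`_i = Dd a x i.
Proof.
move=> hi; rewrite coefM /Dd; apply: eq_bigr => j _.
rewrite !coef_Px.
have hj : (j < N)%N by apply: leq_ltn_trans hi; rewrite -ltnS.
have hij : (i - j < N)%N by apply: leq_ltn_trans hi; apply: leq_subr.
by rewrite hj hij mulrC.
Qed.

Lemma a_part m a x N :
  (3 ^+ N %| 3 ^+ m * (trunc3 a N * trunc3 x N) -
     \sum_(k < N) (if (m <= k)%N then Dd a x (k - m)%N else 0) * 3 ^+ k)%Z.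
Proof.
rewrite reindex_a !trunc3_Px -hornerM.
set P := Px a N * Px x N.
rewrite (_ : 3 ^+ m * P.[3] - \sum_(i < N - m) Dd a x i * 3 ^+ (i + m) = (3 ^+ m * P.[3] - 3 ^+ m * \sum_(i < N) P`_i * 3 ^+ i) +
   (3 ^+ m * \sum_(i < N) P`_i * 3 ^+ i - \sum_(i < N - m) Dd a x i * 3 ^+ (i + m))); last by ring.
apply: rpredD.
  rewrite -mulrBr; apply: dvdz_mull.
  exact: (eval_mod P N).
rewrite mulr_sumr.
rewrite (eq_bigr (fun i : 'I_N => Dd a x i * 3 ^+ (i + m))); last first.
  move=> i _; rewrite /P coef_PaPx // exprD; ring.
apply: (@sum_tail_dvd _ (fun i => Dd a x i * 3 ^+ (i + m))); first exact: leq_subr.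
move=> i hi; apply: dvdz_mull; apply: dvdz_exp2l; lia.
Qed.

Lemma main_ident m a x N : (4 <= m)%N ->
  (3 ^+ N %| trunc3 x N ^+ 3 + 3 ^+ m * trunc3 a N * trunc3 x N -
     \sum_(k < N) LL m a x k * 3 ^+ k)%Z.
Proof.
move=> hm.
rewrite (eq_bigr (fun k : 'I_N => (uu x k.-1 + pp x k) * 3 ^+ k +
     (if (m <= k)%N then Dd a x (k - m)%N else 0) * 3 ^+ k)); last first.
  by move=> k _; rewrite LL_dec // mulrDl.
rewrite big_split /=.
have -> : forall A B C D E : int, A + B * C * D - (E + (\sum_(k < N) (if (m <= k)%N then Dd a x (k - m)%N else 0) * 3 ^+ k)) =
   (A - \sum_(i < N) cc x i * 3 ^+ i) + (\sum_(i < N) cc x i * 3 ^+ i - E) +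
   (B * (C * D) - \sum_(k < N) (if (m <= k)%N then Dd a x (k - m)%N else 0) * 3 ^+ k).
  by move=> *; ring.
apply: rpredD; last exact: a_part.
apply: rpredD; last by rewrite cube_sum; apply: dvdz_mull; exact: dvdzz.
rewrite trunc3_Px -horner_exp.
have -> : \sum_(i < N) cc x i * 3 ^+ i = \sum_(i < N) ((Px x N) ^+ 3)`_i * 3 ^+ i.
  by apply: eq_bigr => i _; rewrite /cc (@cube_trunc x i.+1 N).
exact: eval_mod.
Qed.

Lemma modz_dvd (u v d : int) : (u = v %[mod d])%Z <-> (d %| u - v)%Z.
Proof. by split => [/eqP|h]; [rewrite eqz_mod_dvd | apply/eqP; rewrite eqz_mod_dvd]. Qed.

Definition SS m (a b x : nat -> nat) N : int := \sum_(k < N) (LL m a x k - (b k)%:Z) * 3 ^+ k.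

Lemma sol_iff m a b x : (4 <= m)%N ->
  cubic_sol3 m a b x <-> (forall N, (3 ^+ N %| SS m a b x N)%Z).
Proof.
move=> hm.
have E : forall N, trunc3 x N ^+ 3 + 3 ^+ m * trunc3 a N * trunc3 x N - trunc3 b N =
   (trunc3 x N ^+ 3 + 3 ^+ m * trunc3 a N * trunc3 x N - \sum_(k < N) LL m a x k * 3 ^+ k)
   + SS m a b x N.
  move=> N.
  have -> : SS m a b x N = \sum_(k < N) LL m a x k * 3 ^+ k - trunc3 b N.
    by rewrite /SS /trunc3 -sumrB; apply: eq_bigr => k _; rewrite mulrBl.
  ring.
split=> [H N | H N].
  move: (H N) => /modz_dvd; rewrite E.
  by rewrite rpredDl //; exact: main_ident.
apply/modz_dvd; rewrite E rpredDl //; exact: main_ident.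
Qed.

Lemma MkS m a b x k : (1 <= k)%N ->
  Mk m a b x k.+1 = ((Lhs m a x k.+1 - (b k.+1)%:Z + Mk m a b x k) %/ 3)%Z.
Proof. by case: k. Qed.

Lemma carry_step m a b x k : (2 <= k)%N ->
  SS m a b x k = 3 ^+ k * Mk m a b x k.-1 ->
  ((3 ^+ k.+1 %| SS m a b x k.+1)%Z <->
     (Lhs m a x k + Mk m a b x k.-1 = (b k)%:Z %[mod 3])%Z) /\
  ((Lhs m a x k + Mk m a b x k.-1 = (b k)%:Z %[mod 3])%Z ->
     SS m a b x k.+1 = 3 ^+ k.+1 * Mk m a b x k).
Proof.
move=> hk HS.
have LLk : LL m a x k = Lhs m a x k by rewrite /LL; case: k hk {HS} => [|[|k]].
have ES : SS m a b x k.+1 = 3 ^+ k * (Lhs m a x k + Mk m a b x k.-1 - (b k)%:Z).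
  by rewrite /SS big_ord_recr /= -/(SS m a b x k) HS LLk; ring.
have n0 : (3 : int) ^+ k != 0 by rewrite expf_neq0.
split.
  rewrite modz_dvd ES exprSr dvdz_mul2l //.
move/modz_dvd => h3.
have MK : Mk m a b x k = ((Lhs m a x k + Mk m a b x k.-1 - (b k)%:Z) %/ 3)%Z.
  case: k hk {HS LLk ES n0 h3} => [|[|k]] // _.
  by rewrite MkS //= addrAC.
by rewrite ES MK exprSr -mulrA [3 * _]mulrC divzK.
Qed.

Lemma SS1 m a b x : SS m a b x 1 = (x 0%N)%:Z ^+ 3 - (b 0%N)%:Z.
Proof. by rewrite /SS big_ord_recr big_ord0 /= add0r expr0 mulr1. Qed.

Lemma SS2 m a b x : SS m a b x 2 = (x 0%N)%:Z ^+ 3 - ((b 0%N)%:Z + 3 * (b 1%N)%:Z).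
Proof. rewrite /SS !big_ord_recr big_ord0 /= add0r /LL /=; ring. Qed.

Lemma Mk1 m a b x : Mk m a b x 1 = (((x 0%N)%:Z ^+ 3 - ((b 0%N)%:Z + 3 * (b 1%N)%:Z)) %/ 9)%Z.
Proof. by rewrite /= opprD addrA. Qed.

Theorem theorem3p6 (m : nat) (a b x : nat -> nat) :
  digits3 a -> a 0%N != 0%N ->
  digits3 b -> b 0%N != 0%N ->
  (4 <= m)%N ->
  ((b 0%N, b 1%N) = (1%N, 0%N) \/ (b 0%N, b 1%N) = (2%N, 2%N)) ->
  digits3 x -> x 0%N != 0%N ->
  (cubic_sol3 m a b x <-> congruences36 m a b x).
Proof.
move=> _ _ _ _ hm _ _ _.
rewrite sol_iff //.
have base : (9 %| SS m a b x 2)%Z -> SS m a b x 2 = 3 ^+ 2 * Mk m a b x 1.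
  by move=> h9; rewrite Mk1 -(SS2 m a b x) mulrC divzK.
split.
- move=> H.
  have c1 : ((x 0%N)%:Z ^+ 3 = (b 0%N)%:Z %[mod 3])%Z.
    by apply/modz_dvd; rewrite -(SS1 m a b x); exact: (H 1%N).
  have h9 : (9 %| SS m a b x 2)%Z by exact: (H 2%N).
  have c2 : ((x 0%N)%:Z ^+ 3 = (b 0%N)%:Z + 3 * (b 1%N)%:Z %[mod 9])%Z.
    by apply/modz_dvd; rewrite -(SS2 m a b x).
  have claim : forall j, SS m a b x j.+2 = 3 ^+ j.+2 * Mk m a b x j.+1.
    elim=> [|j IH]; first exact: base.
    have [h1 h2] := carry_step (k := j.+2) (m := m) (a := a) (b := b) (x := x) (erefl _) IH.
    by apply: h2; apply/h1; exact: (H j.+3).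
  split; first exact: c1.
  split; first exact: c2.
  move=> k hk.
  case: k hk => [|[|j]] // _.
  have [h1 _] := carry_step (k := j.+2) (m := m) (a := a) (b := b) (x := x) (erefl _) (claim j).
  by apply/h1; exact: (H j.+3).
- case=> c1 [c2 c3].
  have claim : forall j, SS m a b x j.+2 = 3 ^+ j.+2 * Mk m a b x j.+1.
    elim=> [|j IH]; first by apply: base; rewrite SS2; apply/modz_dvd.
    have [_ h2] := carry_step (k := j.+2) (m := m) (a := a) (b := b) (x := x) (erefl _) IH.
    exact: (h2 (c3 j.+2 (erefl _))).
  case=> [|[|j]].
  + by rewrite expr0 dvd1z.
  + by rewrite expr1 SS1; apply/modz_dvd.
  + by rewrite claim; apply: dvdz_mulr; exact: dvdzz.
Qed.
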